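(* Let $n\geq 4$ and let $\gamma: WT_n\to\mathrm{GL}_{n+1}(\mathbb{C})$ be a homogeneous $3$-local representation of the welded twin group $WT_n$. Then $\gamma$ is unfaithful.
   Context: The virtual twin group $VT_n$ has generators $s_1,\dots,s_{n-1},\rho_1,\dots,\rho_{n-1}$ and defining relations: $s_i^2=1$ ($1\le i\le n-1$); $s_is_j=s_js_i$ ($|i-j|\ge2$); $\rho_i\rho_{i+1}\rho_i=\rho_{i+1}\rho_i\rho_{i+1}$ ($1\le i\le n-2$); $\rho_i\rho_j=\rho_j\rho_i$ ($|i-j|\ge2$); $\rho_i^2=1$; $s_i\rho_j=\rho_js_i$ ($|i-j|\ge2$); $\rho_i\rho_{i+1}s_i=s_{i+1}\rho_i\rho_{i+1}$ ($1\le i\le n-2$). The welded twin group $WT_n$ is the quotient of $VT_n$ by the additional relations $\rho_is_{i+1}s_i=s_{i+1}s_i\rho_{i+1}$ ($1\le i\le n-2$). A representation $\gamma:WT_n\to\mathrm{GL}_{n+1}(\mathbb{C})$ is homogeneous $3$-local if there are fixed $M,N\in\mathrm{GL}_3(\mathbb{C})$ with $\gamma(s_i)=\mathrm{diag}(I_{i-1},M,I_{n-i-1})$ and $\gamma(\rho_i)=\mathrm{diag}(I_{i-1},N,I_{n-i-1})$ for all $i$ (block-diagonal, $I_r$ the $r\times r$ identity). Unfaithful means not injective. *)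

(* Defs.v *)
From HB Require Import structures.
From mathcomp Require Import all_boot all_order all_algebra.
From mathcomp Require Import complex.
From mathcomp Require Import Rstruct.
Set Implicit Arguments. Unset Strict Implicit. Unset Printing Implicit Defensive.
Import Order.TTheory GRing.Theory Num.Theory.
Local Open Scope ring_scope.

Definition CC : Type := complex Rdefinitions.R.

(* Generators of VT_n / WT_n.  [S i] stands for s_(i+1) and [Rho i] for
   rho_(i+1) (0-indexed); a generator is valid in WT_n iff i < n-1. *)
Inductive wgen : Type := S of nat | Rho of nat.

Definition wgen_valid (n : nat) (g : wgen) : bool :=
  match g with S i => (i < n.-1)%N | Rho i => (i < n.-1)%N end.

Inductive wt_rel (n : nat) : seq wgen -> seq wgen -> Prop :=
| rel_ss i : (i < n.-1)%N -> wt_rel n [:: S i; S i] [::]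
| rel_s_comm i j : (i < n.-1)%N -> (j < n.-1)%N -> (i.+2 <= j)%N ->
    wt_rel n [:: S i; S j] [:: S j; S i]
| rel_rho_braid i : (i.+1 < n.-1)%N ->
    wt_rel n [:: Rho i; Rho i.+1; Rho i] [:: Rho i.+1; Rho i; Rho i.+1]
| rel_rho_comm i j : (i < n.-1)%N -> (j < n.-1)%N -> (i.+2 <= j)%N ->
    wt_rel n [:: Rho i; Rho j] [:: Rho j; Rho i]
| rel_rr i : (i < n.-1)%N -> wt_rel n [:: Rho i; Rho i] [::]
| rel_mixed_comm i j : (i < n.-1)%N -> (j < n.-1)%N ->
    ((i.+2 <= j) || (j.+2 <= i))%N ->
    wt_rel n [:: S i; Rho j] [:: Rho j; S i]
| rel_mixed i : (i.+1 < n.-1)%N ->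
    wt_rel n [:: Rho i; Rho i.+1; S i] [:: S i.+1; Rho i; Rho i.+1]
| rel_welded i : (i.+1 < n.-1)%N ->
    wt_rel n [:: Rho i; S i.+1; S i] [:: S i.+1; S i; Rho i.+1].

(* Since all generators are
   involutions, every element of WT_n is represented by such a word. *)
Inductive wt_eq (n : nat) : seq wgen -> seq wgen -> Prop :=
| wt_eq_refl w : wt_eq n w w
| wt_eq_sym w1 w2 : wt_eq n w1 w2 -> wt_eq n w2 w1
| wt_eq_trans w1 w2 w3 : wt_eq n w1 w2 -> wt_eq n w2 w3 -> wt_eq n w1 w3
| wt_eq_rel u v l r : all (wgen_valid n) u -> all (wgen_valid n) v ->
    wt_rel n l r -> wt_eq n (u ++ l ++ v) (u ++ r ++ v).

(* diag(I_j, A, I_(n-j-2)) in M_(n+1), i.e. A placed in rows/columns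
   j, j+1, j+2 (0-indexed); for generator index j (= i-1). *)
Definition local_mx (n j : nat) (A : 'M[CC]_3) : 'M[CC]_(n.+1) :=
  \matrix_(a < n.+1, b < n.+1)
    if [&& (j <= a)%N, (a < j + 3)%N, (j <= b)%N & (b < j + 3)%N]
    then A (inord (a - j)) (inord (b - j))
    else (a == b)%:R.

Definition gen_mx (n : nat) (M N : 'M[CC]_3) (g : wgen) : 'M[CC]_(n.+1) :=
  match g with S i => local_mx n i M | Rho i => local_mx n i N end.

Definition word_mx (n : nat) (M N : 'M[CC]_3) (w : seq wgen) : 'M[CC]_(n.+1) :=
  foldr (fun g acc => gen_mx n M N g *m acc) 1%:M w.

(* Main.v *)
Require Import Defs.
From HB Require Import structures.
From mathcomp Require Import all_boot all_order all_algebra.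
From mathcomp Require Import complex.
From mathcomp Require Import Rstruct.
From mathcomp Require Import ring.
From mathcomp Require Import zify.
Import Order.TTheory GRing.Theory Num.Theory.
Local Open Scope ring_scope.
Set Implicit Arguments. Unset Strict Implicit.
Lemma sum_split n (F : nat -> CC) j : (j + 3 <= n)%N ->
  (forall r, (r < n)%N -> ~~ ((j <= r) && (r < j + 3))%N -> F r = 0) ->
  \sum_(0 <= r < n) F r = F j + F j.+1 + F j.+2.
Proof.
move=> hj hF.
have h1 : (j <= j + 3)%N by lia.
have h2 : (0 <= j)%N by lia.
rewrite (big_cat_nat h2 (leq_trans h1 hj)) /= (big_cat_nat h1 hj) /=.
rewrite big_nat_cond big1 ?add0r; last first.
  move=> r /andP[/andP[_ hr] _]; apply: hF; lia.
rewrite [X in _ + X]big_nat_cond [X in _ + X]big1 ?addr0; last first.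
  move=> r /andP[/andP[hr1 hr2] _]; apply: hF; lia.
rewrite big_ltn; last lia.
rewrite big_ltn; last lia.
rewrite big_ltn; last lia.
rewrite big_geq; last lia.
by rewrite addr0 !addrA.
Qed.
Lemma mulE n j p (A : 'M[CC]_3) (X : 'M[CC]_(n.+1)) q :
  (j + 2 <= n)%N -> (p <= n)%N ->
  (local_mx n j A *m X) (inord p) q =
  if ((j <= p) && (p < j + 3))%N then
    A (inord (p - j)) (inord 0) * X (inord j) q
  + A (inord (p - j)) (inord 1) * X (inord j.+1) q
  + A (inord (p - j)) (inord 2) * X (inord j.+2) q
  else X (inord p) q.
Proof.
move=> hj hp.
have hp' : (p < n.+1)%N by lia.
rewrite mxE.
rewrite (eq_bigr (fun r : 'I_n.+1 => (fun r : nat => local_mx n j A (inord p) (inord r) * X (inord r) q) r)); last first.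
  by move=> r _; rewrite inord_val.
rewrite -(big_mkord xpredT (fun r : nat => local_mx n j A (inord p) (inord r) * X (inord r) q)).
case: ifP => hin.
  rewrite (@sum_split _ _ j); last first.
  - move=> r hr hnr; rewrite mxE !inordK //.
    rewrite (negbTE hnr) !andbF /=.
    have -> : (@inord n p == inord r) = false.
      apply/negP => /eqP/(congr1 val); rewrite /= !inordK //; lia.
    by rewrite mul0r.
  - lia.
  rewrite !mxE !inordK; try lia.
  move/andP: hin => [h1 h2]; rewrite h1 h2 /=.
  have -> : (j <= j)%N by lia.
  have -> : (j <= j.+1)%N by lia.
  have -> : (j <= j.+2)%N by lia.
  have -> : (j.+1 < j + 3)%N by lia.
  have -> : (j.+2 < j + 3)%N by lia.
  have -> : (j < j + 3)%N by lia.
  have -> : (j.+2 - j = 2)%N by lia.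
  have -> : (j.+1 - j = 1)%N by lia.
  by rewrite subnn.
rewrite -[in RHS](mul1mx X) mxE.
rewrite (eq_bigr (fun r : 'I_n.+1 => (fun r : nat => (1%:M : 'M[CC]_(n.+1)) (inord p) (inord r) * X (inord r) q) r)); last first.
  by move=> r _; rewrite inord_val.
rewrite -(big_mkord xpredT (fun r : nat => (1%:M : 'M[CC]_(n.+1)) (inord p) (inord r) * X (inord r) q)).
apply: eq_big_nat => r hr.
have hr2 : (r < n.+1)%N by case/andP: hr.
rewrite !mxE !inordK //.
by rewrite andbA hin.
Qed.

Definition e3 (a b c d e f g h k : CC) (i j : nat) : CC :=
  match i, j with
  | 0, 0 => a | 0, 1 => b | 0, _ => c
  | 1, 0 => d | 1, 1 => e | 1, _ => f
  | _, 0 => g | _, 1 => h | _, _ => k end.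

Definition mk3 (a b c d e f g h k : CC) : 'M[CC]_3 :=
  \matrix_(i < 3, j < 3) e3 a b c d e f g h k i j.

Lemma mk3E a b c d e f g h k i j : (i < 3)%N -> (j < 3)%N ->
  mk3 a b c d e f g h k (inord i) (inord j) = e3 a b c d e f g h k i j.
Proof. by move=> hi hj; rewrite mxE !inordK. Qed.

Definition gidx (g : wgen) : nat := match g with S j => j | Rho j => j end.

Fixpoint wentry (mf nf : nat -> nat -> CC) (w : seq wgen) (p q : nat) : CC :=
  match w with
  | [::] => if Nat.eqb p q then 1 else 0
  | g :: w' =>
    let j := gidx g in
    let f := match g with S _ => mf | Rho _ => nf end in
    if Nat.leb j p && Nat.ltb p (Nat.add j 3%N) then
      f (Nat.sub p j) 0%N * wentry mf nf w' j q
      + f (Nat.sub p j) 1%N * wentry mf nf w' (Nat.succ j) q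
      + f (Nat.sub p j) 2%N * wentry mf nf w' (Nat.succ (Nat.succ j)) q
    else wentry mf nf w' p q
  end.

Lemma eqbE a b : Nat.eqb a b = (a == b).
Proof. by apply/idP/idP => [/PeanoNat.Nat.eqb_eq -> //|/eqP ->]; apply/PeanoNat.Nat.eqb_eq. Qed.
Lemma lebE a b : Nat.leb a b = (a <= b)%N.
Proof. apply/idP/idP => [/PeanoNat.Nat.leb_le/ssrnat.leP //|/ssrnat.leP h]. by apply/PeanoNat.Nat.leb_le. Qed.
Lemma ltbE a b : Nat.ltb a b = (a < b)%N.
Proof. by rewrite /Nat.ltb lebE. Qed.

Lemma wentryE n (a b c d e f g h k A B C D E F G H K : CC) w p q :
  all (fun x => gidx x + 2 <= n)%N w -> (p <= n)%N -> (q <= n)%N ->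
  word_mx n (mk3 a b c d e f g h k) (mk3 A B C D E F G H K) w (inord p) (inord q)
  = wentry (e3 a b c d e f g h k) (e3 A B C D E F G H K) w p q.
Proof.
elim: w p => [|x w IH] p /=.
  move=> _ hp hq; rewrite mxE eqbE.
  have -> : (@inord n p == inord q) = (p == q).
    apply/eqP/eqP => [/(congr1 val)|->//]; rewrite /= !inordK //; lia.
  by case: (p == q).
move=> /andP[hx hw] hp hq.
have Hm : forall (Y : 'M[CC]_3) (mf : nat -> nat -> CC),
  (forall i j, (i < 3)%N -> (j < 3)%N -> Y (inord i) (inord j) = mf i j) ->
  (local_mx n (gidx x) Y *m word_mx n (mk3 a b c d e f g h k) (mk3 A B C D E F G H K) w) (inord p) (inord q)
  = if Nat.leb (gidx x) p && Nat.ltb p (Nat.add (gidx x) 3%N) then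
      mf (Nat.sub p (gidx x)) 0%N * wentry (e3 a b c d e f g h k) (e3 A B C D E F G H K) w (gidx x) q
      + mf (Nat.sub p (gidx x)) 1%N * wentry (e3 a b c d e f g h k) (e3 A B C D E F G H K) w (Nat.succ (gidx x)) q
      + mf (Nat.sub p (gidx x)) 2%N * wentry (e3 a b c d e f g h k) (e3 A B C D E F G H K) w (Nat.succ (Nat.succ (gidx x))) q
    else wentry (e3 a b c d e f g h k) (e3 A B C D E F G H K) w p q.
  move=> Y mf hY.
  rewrite mulE // lebE ltbE.
  have -> : Nat.add (gidx x) 3 = (gidx x + 3)%N by [].
  case: ifP => hin; last by rewrite IH.
  have hsub : (Nat.sub p (gidx x) = p - gidx x)%N by [].
  rewrite hsub !hY; try lia.
  by rewrite !IH //; lia.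
by case: x hx Hm => j hx Hm /=; apply: Hm => i l hi hl; rewrite mk3E.
Qed.

Lemma mk3_ex (Y : 'M[CC]_3) : exists a b c d e f g h k, Y = mk3 a b c d e f g h k.
Proof.
exists (Y (inord 0) (inord 0)), (Y (inord 0) (inord 1)), (Y (inord 0) (inord 2)),
  (Y (inord 1) (inord 0)), (Y (inord 1) (inord 1)), (Y (inord 1) (inord 2)),
  (Y (inord 2) (inord 0)), (Y (inord 2) (inord 1)), (Y (inord 2) (inord 2)).
apply/matrixP => i j; rewrite mxE.
by case: i => [[|[|[|i]]] hi] //; case: j => [[|[|[|j]]] hj] //=;
  congr (Y _ _); apply: val_inj; rewrite /= inordK.
Qed.

Lemma valid_idx n w : all (wgen_valid n) w -> all (fun x => gidx x + 2 <= n)%N w.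
Proof.
elim: w => //= x w IH /andP[hx hw]; rewrite IH // andbT.
by case: x hx => j /= hj; lia.
Qed.

Lemma rel_eq n l r : wt_rel n l r -> all (wgen_valid n) l -> all (wgen_valid n) r -> wt_eq n l r.
Proof.
move=> hr _ _; have := @wt_eq_rel n [::] [::] l r isT isT hr.
by rewrite /= !cats0.
Qed.

Lemma relE n (a b c d e f g h k A B C D E F G H K : CC) l r :
  (forall w1 w2 : seq wgen, all (wgen_valid n) w1 -> all (wgen_valid n) w2 ->
     wt_eq n w1 w2 -> word_mx n (mk3 a b c d e f g h k) (mk3 A B C D E F G H K) w1
                     = word_mx n (mk3 a b c d e f g h k) (mk3 A B C D E F G H K) w2) ->
  wt_rel n l r -> all (wgen_valid n) l -> all (wgen_valid n) r ->
  forall p q, (p <= n)%N -> (q <= n)%N ->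
  wentry (e3 a b c d e f g h k) (e3 A B C D E F G H K) l p q
  = wentry (e3 a b c d e f g h k) (e3 A B C D E F G H K) r p q.
Proof.
move=> Hrep hr hl hrr p q hp hq.
rewrite -!(@wentryE n) ?valid_idx //.
by rewrite (Hrep l r hl hrr (@rel_eq n l r hr hl hrr)).
Qed.

Lemma eq0_from (x y z : CC) : x = y -> z = x - y -> z = 0.
Proof. by move=> -> ->; rewrite subrr. Qed.

Ltac simw H := cbn [wentry e3 gidx Nat.leb Nat.ltb Nat.sub Nat.add Nat.eqb Nat.succ andb] in H.

Lemma mul0l (x y : CC) : x * y = 0 -> x != 0 -> y = 0.
Proof. by move=> /eqP; rewrite mulf_eq0 => /orP[/eqP->|/eqP]; rewrite ?eqxx. Qed.
Lemma mul0r' (x y : CC) : x * y = 0 -> y != 0 -> x = 0.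
Proof. by rewrite mulrC; apply: mul0l. Qed.
Lemma sq0 (x : CC) : x * x = 0 -> x = 0.
Proof. by move=> /eqP; rewrite mulf_eq0 orbb => /eqP. Qed.
Lemma sqm1 (x : CC) : x * x - 1 = 0 -> x != 1 -> x = -1.
Proof.
move=> h hx; have : (x - 1) * (x + 1) = 0 by rewrite -h; ring.
move/mul0l; rewrite subr_eq0 => /(_ hx) h2; apply/eqP; rewrite -subr_eq0 opprK; exact/eqP.
Qed.
Lemma neq0_of_mul1 (x y : CC) : x * y - 1 = 0 -> x != 0.
Proof. by move=> h; apply/eqP => x0; move: h; rewrite x0 mul0r sub0r => /eqP; rewrite oppr_eq0 oner_eq0. Qed.
Lemma neq0_of_mul1r (x y : CC) : x * y - 1 = 0 -> y != 0.
Proof. by rewrite mulrC; apply: neq0_of_mul1. Qed.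

Definition scount (w : seq wgen) := count (fun g => if g is S _ then true else false) w.

Lemma scount_inv n w1 w2 : wt_eq n w1 w2 -> odd (scount w1) = odd (scount w2).
Proof.
elim=> [w|x1 x2 _ IH|x1 x2 x3 _ IH1 _ IH2|u v l r _ _ hr] //.
- by rewrite IH1 IH2.
- rewrite /scount !count_cat !oddD.
  by case: hr.
Qed.

Ltac simg := cbn [wentry e3 gidx Nat.leb Nat.ltb Nat.sub Nat.add Nat.eqb Nat.succ andb].

Lemma finish_A m (M N : 'M[CC]_3) f h F H :
  f * h - 1 = 0 -> F * H - 1 = 0 ->
  M = mk3 1 0 0 0 0 f 0 h 0 -> N = mk3 1 0 0 0 0 F 0 H 0 ->
  exists w : seq wgen,
    [/\ all (wgen_valid m.+4) w, ~ wt_eq m.+4 w [::] & word_mx m.+4 M N w = 1%:M].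
Proof.
move=> hf hF -> ->.
exists [:: S 0; Rho 1; S 0; Rho 1; S 0; Rho 1]; split => //.
  by move/scount_inv.
have fn0 := neq0_of_mul1 hf; have Fn0 := neq0_of_mul1 hF.
have -> : h = f^-1 by apply: (mulfI fn0); rewrite divff //; apply/subr0_eq.
have -> : H = F^-1 by apply: (mulfI Fn0); rewrite divff //; apply/subr0_eq.
have -> : (1%:M : 'M[CC]_(m.+4.+1)) = word_mx m.+4 (mk3 1 0 0 0 0 f 0 f^-1 0) (mk3 1 0 0 0 0 F 0 F^-1 0) [::] by [].
apply/matrixP => p q; rewrite -(inord_val p) -(inord_val q).
rewrite !(@wentryE m.+4) //; try by rewrite -ltnS.
case: p => p hp; case: q => q hq /=.
do 5 (try destruct p as [|p]); do 5 (try destruct q as [|q]); simg; try field => //.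
all: by rewrite ?fn0 ?Fn0.
Qed.

Lemma finish_B m (M N : 'M[CC]_3) f h F H :
  f * h - 1 = 0 -> F * H - 1 = 0 ->
  M = mk3 0 f 0 h 0 0 0 0 1 -> N = mk3 0 F 0 H 0 0 0 0 1 ->
  exists w : seq wgen,
    [/\ all (wgen_valid m.+4) w, ~ wt_eq m.+4 w [::] & word_mx m.+4 M N w = 1%:M].
Proof.
move=> hf hF -> ->.
exists [:: S 0; Rho 1; S 0; Rho 1; S 0; Rho 1]; split => //.
  by move/scount_inv.
have fn0 := neq0_of_mul1 hf; have Fn0 := neq0_of_mul1 hF.
have -> : h = f^-1 by apply: (mulfI fn0); rewrite divff //; apply/subr0_eq.
have -> : H = F^-1 by apply: (mulfI Fn0); rewrite divff //; apply/subr0_eq.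
have -> : (1%:M : 'M[CC]_(m.+4.+1)) = word_mx m.+4 (mk3 0 f 0 f^-1 0 0 0 0 1) (mk3 0 F 0 F^-1 0 0 0 0 1) [::] by [].
apply/matrixP => p q; rewrite -(inord_val p) -(inord_val q).
rewrite !(@wentryE m.+4) //; try by rewrite -ltnS.
case: p => p hp; case: q => q hq /=.
do 5 (try destruct p as [|p]); do 5 (try destruct q as [|q]); simg; try field => //.
all: by rewrite ?fn0 ?Fn0.
Qed.

Lemma finish_eq m (M N : 'M[CC]_3) :
  (forall w1 w2 : seq wgen, all (wgen_valid m.+4) w1 -> all (wgen_valid m.+4) w2 ->
     wt_eq m.+4 w1 w2 -> word_mx m.+4 M N w1 = word_mx m.+4 M N w2) ->
  N = M ->
  exists w : seq wgen,
    [/\ all (wgen_valid m.+4) w, ~ wt_eq m.+4 w [::] & word_mx m.+4 M N w = 1%:M].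
Proof.
move=> Hrep eNM; exists [:: S 0; Rho 0]; split => //.
  by move/scount_inv.
have := Hrep [:: S 0; S 0] [::] isT isT (rel_eq (rel_ss (n:=m.+4) (i:=0) isT) isT isT).
by rewrite /= eNM.
Qed.

Lemma two_neq0 : (2 : CC) != 0.
Proof. by rewrite pnatr_eq0. Qed.
Lemma lin (x y z : CC) : z = 0 -> x - y = z -> x = y.
Proof. by move=> -> /subr0_eq. Qed.
Lemma linN (x y z : CC) : z = 0 -> y - x = z -> x = y.
Proof. by move=> -> /subr0_eq ->. Qed.

Ltac geq R rel p q :=
  let H := fresh "H" in
  have H := R _ _ rel isT isT p q isT isT;
  cbn [wentry e3 gidx Nat.leb Nat.ltb Nat.sub Nat.add Nat.eqb Nat.succ andb] in H;
  first [ apply: (eq0_from H); ring | apply: (eq0_from (esym H)); ring ].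

Ltac zfrom h := first [ apply: (eq0_from h); ring | apply: (eq0_from (esym h)); ring ].
Ltac lfrom h := first [ apply: (lin h); ring | apply: (linN h); ring ].

Unset Implicit Arguments.

Theorem theorem4p6 (n : nat) (M N : 'M[CC]_3) :
  (4 <= n)%N ->
  M \in unitmx -> N \in unitmx ->
  (forall w1 w2 : seq wgen, all (wgen_valid n) w1 -> all (wgen_valid n) w2 ->
     wt_eq n w1 w2 -> word_mx n M N w1 = word_mx n M N w2) ->
  exists w : seq wgen,
    [/\ all (wgen_valid n) w, ~ wt_eq n w [::] & word_mx n M N w = 1%:M].
Proof.
move=> hn _ _.
have [m ->] : exists m, n = m.+4 by exists (n - 4)%N; lia.
have [a [b [c [d [e [f [g [h [k eM]]]]]]]]] := mk3_ex M.
have [A [B [C [D [E [F [G [H [K eN]]]]]]]]] := mk3_ex N.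
subst M N => Hrep.
have R := relE Hrep.
pose S02 := rel_s_comm (n:=m.+4) (i:=0) (j:=2) isT isT isT.
pose R02 := rel_rho_comm (n:=m.+4) (i:=0) (j:=2) isT isT isT.
pose SR02 := rel_mixed_comm (n:=m.+4) (i:=0) (j:=2) isT isT isT.
pose RS02 := rel_mixed_comm (n:=m.+4) (i:=2) (j:=0) isT isT isT.
pose MM := rel_ss (n:=m.+4) (i:=0) isT.
pose NN := rel_rr (n:=m.+4) (i:=0) isT.
pose MX := rel_mixed (n:=m.+4) (i:=0) isT.
pose WD := rel_welded (n:=m.+4) (i:=0) isT.
pose BR := rel_rho_braid (n:=m.+4) (i:=0) isT.
have c0 : c = 0 by apply: sq0; geq R S02 0%N 4%N.
have g0 : g = 0 by apply: sq0; geq R S02 4%N 0%N.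
have C0 : C = 0 by apply: sq0; geq R R02 0%N 4%N.
have G0 : G = 0 by apply: sq0; geq R R02 4%N 0%N.
subst c g C G.
case: (eqVneq f 0) => [f0|fn0]; last first.
  have a1 : a = 1 by apply/subr0_eq/(mul0l _ fn0); geq R S02 1%N 2%N.
  have A1 : A = 1 by apply/subr0_eq/(mul0l _ fn0); geq R SR02 1%N 2%N.
  have b0 : b = 0 by apply: (mul0r' _ fn0); geq R S02 1%N 3%N.
  have B0 : B = 0 by apply: (mul0l _ fn0); geq R SR02 1%N 3%N.
  subst a A b B.
  have ek : e = - k by apply/subr0_eq; rewrite opprK; apply: (mul0l _ fn0); geq R MM 1%N 2%N.
  subst e.
  case: (eqVneq k 1) => [k1|kn1].
    subst k.
    have h0 : h = 0 by apply: (mul0l _ fn0); geq R MM 2%N 2%N.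
    subst h.
    have H0 : H = 0 by geq R WD 3%N 2%N.
    have K1 : K = 1 by apply/subr0_eq; geq R WD 3%N 3%N.
    subst H K.
    have nn12 : F * (1 + E) = 0 by geq R NN 1%N 2%N.
    have mx23 : 2 * F - f - d * F * F = 0 by geq R MX 2%N 3%N.
    have ef : f = F * (2 - d * F) by lfrom mx23.
    have Fn0 : F != 0 by apply/eqP => F0; move: fn0; rewrite ef F0 mul0r eqxx.
    have Em : E = -1 by lfrom (mul0l nn12 Fn0).
    subst E.
    have mx11 : 2 * (D * F - 1) = 0 by geq R MX 1%N 1%N.
    have DF := mul0l mx11 two_neq0.
    have wd12 : F * (d * f - 1) = 0 by geq R WD 1%N 2%N.
    have df := mul0l wd12 Fn0.
    rewrite ef in df.
    have hx : (d * F - 1) * (d * F - 1) = 0 by zfrom df.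
    have dF := sq0 hx.
    have dD : d = D by apply/subr0_eq/(mul0r' _ Fn0); zfrom (etrans dF (esym DF)).
    have fF : f = F by rewrite ef; lfrom (etrans (congr1 (fun t => F * t) dF) (mulr0 F)).
    clear ef; subst d f.
    by apply: finish_eq Hrep _.
  have d0 : d = 0 by apply: (mul0r' _ (_ : k - 1 != 0)); [geq R S02 3%N 2%N | rewrite subr_eq0].
  have D0 : D = 0 by apply: (mul0r' _ (_ : k - 1 != 0)); [geq R SR02 3%N 2%N | rewrite subr_eq0].
  subst d D.
  have hkF : k * k * F = 0 by geq R WD 2%N 3%N.
  case: (eqVneq k 0) => [k0|kn0].
    subst k.
    have fh : f * h - 1 = 0 by geq R MM 2%N 2%N.
    have hn0 := neq0_of_mul1r fh.
    have mx12 : E * (f - F) = 0 by geq R MX 1%N 2%N.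
    have mx21 : h * (E * K) = 0 by geq R MX 2%N 1%N.
    have nn12 : F * (K + E) = 0 by geq R NN 1%N 2%N.
    have nn11 : F * H + E * E - 1 = 0 by geq R NN 1%N 1%N.
    have nn22 : K * K + F * H - 1 = 0 by geq R NN 2%N 2%N.
    have E0 : E = 0.
      case: (eqVneq E 0) => // En0; exfalso.
      have K0 := mul0l (mul0l mx21 hn0) En0.
      have fF := subr0_eq (mul0l mx12 En0).
      subst K f.
      rewrite add0r in nn12; have F0 := mul0r' nn12 En0.
      by move: fn0; rewrite F0 eqxx.
    subst E.
    have FH : F * H - 1 = 0 by zfrom nn11.
    have K0 : K = 0 by apply: sq0; zfrom (etrans nn22 (esym FH)).
    subst K.
    eapply finish_A; [exact: fh | exact: FH | by rewrite oppr0 | by []].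
  have F0 : F = 0 by apply: (mul0l hkF); rewrite mulf_neq0.
  subst F.
  have mx33 : K * (1 - k) = 0 by geq R MX 3%N 3%N.
  have K0 : K = 0 by apply: (mul0r' mx33); rewrite subr_eq0 eq_sym.
  subst K.
  have : (1 : CC) = 0 by geq R NN 2%N 2%N.
  by move/eqP; rewrite oner_eq0.
subst f.
case: (eqVneq F 0) => [F0|Fn0]; last first.
  exfalso.
  have a1 : a = 1 by apply/subr0_eq/(mul0l _ Fn0); geq R RS02 1%N 2%N.
  have b0 : b = 0 by apply: (mul0r' _ Fn0); geq R RS02 1%N 3%N.
  subst a b.
  have ek : e * k = 0 by apply: (mul0r' _ Fn0); geq R WD 2%N 3%N.
  have mm22 : k * k - 1 = 0 by geq R MM 2%N 2%N.
  have mm11 : e * e - 1 = 0 by geq R MM 1%N 1%N.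
  have e0 := mul0r' ek (neq0_of_mul1 mm22).
  by move: mm11; rewrite e0 mul0r sub0r => /eqP; rewrite oppr_eq0 oner_eq0.
subst F.
case: (boolP ((h != 0) || (H != 0))) => [/orP hH|]; last first.
  rewrite negb_or !negbK => /andP[/eqP h0 /eqP H0]; subst h H.
  have mm22 : k * k - 1 = 0 by geq R MM 2%N 2%N.
  have nn22 : K * K - 1 = 0 by geq R NN 2%N 2%N.
  have mx33 : K * (1 - k) = 0 by geq R MX 3%N 3%N.
  have k1 : k = 1 by apply/esym/subr0_eq/(mul0l mx33); exact: neq0_of_mul1 nn22.
  subst k.
  have wd33 : 1 - K = 0 by geq R WD 3%N 3%N.
  have K1 : K = 1 by apply/esym/subr0_eq.
  subst K.
  case: (eqVneq A 0) => [A0|An0].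
    subst A.
    have nn00 : B * D - 1 = 0 by geq R NN 0%N 0%N.
    have nn11 : E * E + B * D - 1 = 0 by geq R NN 1%N 1%N.
    have E0 : E = 0 by apply: sq0; zfrom (etrans nn11 (esym nn00)).
    subst E.
    have Bn0 := neq0_of_mul1 nn00.
    have ae : a * e = 0 by apply: (mul0r' _ Bn0); geq R WD 0%N 1%N.
    have wd00 : a * (d * B - 1) = 0 by geq R WD 0%N 0%N.
    have wd22 : e * (1 - d * B) = 0 by geq R WD 2%N 2%N.
    have mm10 : d * (e + a) = 0 by geq R MM 1%N 0%N.
    have a0 : a = 0.
      case: (eqVneq a 0) => // an0; exfalso.
      have e0 := mul0l ae an0; subst e.
      rewrite add0r in mm10; have d0 := mul0r' mm10 an0; subst d.
      by move: (mul0l wd00 an0) => /eqP; rewrite mul0r sub0r oppr_eq0 oner_eq0.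
    subst a.
    have e0 : e = 0.
      case: (eqVneq e 0) => // en0; exfalso.
      rewrite addr0 in mm10; have d0 := mul0r' mm10 en0; subst d.
      by move: (mul0l wd22 en0) => /eqP; rewrite mul0r subr0 oner_eq0.
    subst e.
    have mm00 : b * d - 1 = 0 by geq R MM 0%N 0%N.
    by eapply finish_B; [exact: mm00 | exact: nn00 | by [] | by []].
  have br00 : A + B * D - 1 = 0 by apply: (mul0l _ An0); geq R BR 0%N 0%N.
  have nn00 : B * D + A * A - 1 = 0 by geq R NN 0%N 0%N.
  have A1 : A = 1 by apply/subr0_eq/(mul0l _ An0); zfrom (etrans nn00 (esym br00)).
  subst A.
  have BD : B * D = 0 by zfrom br00.
  have nn11 : E * E + B * D - 1 = 0 by geq R NN 1%N 1%N.
  rewrite BD addr0 in nn11.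
  have En0 := neq0_of_mul1 nn11.
  have B0 : B = 0 by apply: (mul0r' _ En0); geq R BR 0%N 1%N.
  have D0 : D = 0 by apply: (mul0r' _ En0); geq R BR 1%N 0%N.
  subst B D.
  have a1 : a = 1 by apply/subr0_eq; geq R MX 0%N 0%N.
  subst a.
  have d0 : d = 0 by apply: (mul0r' _ En0); geq R MX 1%N 0%N.
  have b0 : b = 0 by geq R MX 0%N 1%N.
  subst d b.
  have mm11 : e * e - 1 = 0 by geq R MM 1%N 1%N.
  have E1 : E = 1 by apply/subr0_eq/(mul0l _ (neq0_of_mul1 mm11)); geq R WD 1%N 1%N.
  subst E.
  have e1 : e = 1 by apply/subr0_eq; geq R MX 1%N 1%N.
  subst e.
  by apply: finish_eq Hrep _.
have [a1 [A1 [d0 D0]]] : a = 1 /\ A = 1 /\ d = 0 /\ D = 0.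
  case: hH => hn0.
    split; first by apply/subr0_eq/(mul0l _ hn0); geq R S02 2%N 1%N.
    split; first by apply/subr0_eq/(mul0l _ hn0); geq R SR02 2%N 1%N.
    split; first by apply: (mul0r' _ hn0); geq R S02 3%N 1%N.
    by apply: (mul0l _ hn0); geq R SR02 3%N 1%N.
  split; first by apply/subr0_eq/(mul0l _ hn0); geq R RS02 2%N 1%N.
  split; first by apply/subr0_eq/(mul0l _ hn0); geq R R02 2%N 1%N.
  split; first by apply: (mul0r' _ hn0); geq R RS02 3%N 1%N.
  by apply: (mul0r' _ hn0); geq R R02 3%N 1%N.
subst a A d D.
have mm22 : k * k - 1 = 0 by geq R MM 2%N 2%N.
have nn22 : K * K - 1 = 0 by geq R NN 2%N 2%N.
have mx33 : K * (1 - k) = 0 by geq R MX 3%N 3%N.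
have k1 : k = 1 by apply/esym/subr0_eq/(mul0l mx33); exact: neq0_of_mul1 nn22.
subst k.
have wd33 : 1 - K = 0 by geq R WD 3%N 3%N.
have K1 : K = 1 by apply/esym/subr0_eq.
subst K.
have mm11 : e * e - 1 = 0 by geq R MM 1%N 1%N.
have nn11 : E * E - 1 = 0 by geq R NN 1%N 1%N.
have mm21 : h * (1 + e) = 0 by geq R MM 2%N 1%N.
have nn21 : H * (1 + E) = 0 by geq R NN 2%N 1%N.
have mm01 : b * (1 + e) = 0 by geq R MM 0%N 1%N.
have nn01 : B * (1 + E) = 0 by geq R NN 0%N 1%N.
case: (eqVneq e 1) => [e1|en1].
  subst e.
  have h0 := mul0r' mm21 two_neq0.
  have b0 := mul0r' mm01 two_neq0.
  subst h b.
  have E1 : E = 1 by apply/subr0_eq; geq R WD 1%N 1%N.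
  subst E.
  have H0 := mul0r' nn21 two_neq0.
  have B0 := mul0r' nn01 two_neq0.
  subst H B.
  by apply: finish_eq Hrep _.
have em := sqm1 mm11 en1.
subst e.
have mx22 : 2 * (E + B * H) = 0 by geq R MX 2%N 2%N.
have En1 : E != 1.
  apply/eqP => E1; subst E.
  have B0 := mul0r' nn01 two_neq0; subst B.
  by move: (mul0l mx22 two_neq0) => /eqP; rewrite mul0r addr0 oner_eq0.
have Em := sqm1 nn11 En1.
subst E.
have BH : B * H - 1 = 0 by apply: (mul0l _ two_neq0); zfrom mx22.
have wd11 : 2 * (b * h - 1) = 0 by geq R WD 1%N 1%N.
have bh := mul0l wd11 two_neq0.
have mx01 : b = B * (2 - h * B) by apply: (lin (_ : - 2 * B + h * B * B + b = 0)); [geq R MX 0%N 1%N | ring].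
rewrite mx01 in bh.
have hB : h * B - 1 = 0 by apply: sq0; zfrom bh.
have bB : b = B by rewrite mx01; lfrom (etrans (congr1 (fun t => B * t) hB) (mulr0 B)).
have Hh : H = h by apply/subr0_eq/(mul0r' _ (neq0_of_mul1 BH)); zfrom (etrans BH (esym hB)).
clear mx01; subst b H.
by apply: finish_eq Hrep _.
Qed.
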